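(* Let $\gamma > 1$ and let $I$ be a $\gamma$-stable instance of the metric Steiner tree problem with optimal Steiner tree $\mathrm{OPT}$. Then every Steiner point $s$ that is a vertex of $\mathrm{OPT}$ has degree in $\mathrm{OPT}$ strictly greater than $\frac{2}{2 - \gamma}$.
   Context: An instance of the metric Steiner tree problem consists of a finite set $V$ of points of a metric space with metric $d$, a set $T \subseteq V$ of terminals, and the complete graph on $V$ with edge weights $w_{uv} = d(u,v)$. Points of $V \setminus T$ are Steiner points. A Steiner tree is a tree in this complete graph whose vertex set contains all of $T$; its weight is the sum of its edge weights. For $\gamma > 1$, the instance is $\gamma$-stable if it has a minimum-weight Steiner tree $\mathrm{OPT}$ such that for every $w' : V \times V \to \mathbb{R}_{\ge 0}$ with $w_{uv} \le w'_{uv} \le \gamma w_{uv}$ for all $u,v$, every minimum-weight Steiner tree with respect to $w'$ equals $\mathrm{OPT}$. *)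

(* Defs.v *)
From HB Require Import structures.
From mathcomp Require Import all_boot all_order all_algebra.
Set Implicit Arguments. Unset Strict Implicit. Unset Printing Implicit Defensive.
Import Order.TTheory GRing.Theory Num.Theory.
Local Open Scope ring_scope.

Definition is_metric (R : realFieldType) (V : finType) (d : V -> V -> R) : Prop :=
  [/\ (forall x y, 0 <= d x y),
      (forall x y, d x y = 0 <-> x = y),
      (forall x y, d x y = d y x) &
      (forall x y z, d x z <= d x y + d y z)].

(* Subgraphs of the complete graph on V: a pair (vertex set, edge set),
   edges being 2-element subsets of V. *)
Definition subgraph (V : finType) := ({set V} * {set {set V}})%type.

Definition adj (V : finType) (E : {set {set V}}) : rel V :=
  fun u v => (u != v) && ([set u; v] \in E).

Definition is_tree (V : finType) (G : subgraph V) : Prop :=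
  [/\ G.1 != set0,
      (forall e, e \in G.2 -> #|e| = 2 /\ e \subset G.1),
      (forall u v, u \in G.1 -> v \in G.1 -> connect (adj G.2) u v) &
      ~ (exists s : seq V, [/\ (3 <= size s)%N, uniq s & cycle (adj G.2) s])].

Definition is_steiner (V : finType) (T : {set V}) (G : subgraph V) : Prop :=
  is_tree G /\ T \subset G.1.

(* Weight of the edge {u,v} under the metric: d(u,v) (max over the pair). *)
Definition edge_len (R : realFieldType) (V : finType) (d : V -> V -> R)
  (e : {set V}) : R :=
  \big[Num.max/0]_(u in e) \big[Num.max/0]_(v in e) d u v.

Definition weight (R : realFieldType) (V : finType) (c : {set V} -> R)
  (G : subgraph V) : R := \sum_(e in G.2) c e.

Definition min_steiner (R : realFieldType) (V : finType) (T : {set V})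
  (c : {set V} -> R) (G : subgraph V) : Prop :=
  is_steiner T G /\ forall G', is_steiner T G' -> weight c G <= weight c G'.

Definition perturbation (R : realFieldType) (V : finType) (d : V -> V -> R)
  (gamma : R) (c : {set V} -> R) : Prop :=
  forall u v, u != v ->
    edge_len d [set u; v] <= c [set u; v] <= gamma * edge_len d [set u; v].

Definition stable (R : realFieldType) (V : finType) (d : V -> V -> R)
  (T : {set V}) (gamma : R) : Prop :=
  exists OPT : subgraph V,
    min_steiner T (edge_len d) OPT /\
    forall c, perturbation d gamma c ->
      forall G, min_steiner T c G -> G = OPT.

Definition deg (V : finType) (G : subgraph V) (s : V) : nat :=
  #|[set e in G.2 | s \in e]|.

(* Main.v *)
Require Import Defs.
From HB Require Import structures.
From mathcomp Require Import all_boot all_order all_algebra.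
From mathcomp Require Import ring lra.
From Stdlib Require Import ClassicalEpsilon.
Set Implicit Arguments. Unset Strict Implicit. Unset Printing Implicit Defensive.
Import Order.TTheory GRing.Theory Num.Theory.
Local Open Scope ring_scope.
Section Aux.
Variables (R : realFieldType) (V : finType).

Lemma edge_len_ge0 (d : V -> V -> R) e : 0 <= edge_len d e.
Proof. rewrite /edge_len; exact: bigmax_ge_id. Qed.

Lemma sum_setU_le (I : finType) (A B : {set I}) (F : I -> R) :
  (forall i, 0 <= F i) ->
  \sum_(i in A :|: B) F i <= \sum_(i in A) F i + \sum_(i in B) F i.
Proof.
move=> F0; rewrite (big_mkcond (fun i => i \in A :|: B)) (big_mkcond (fun i => i \in A)).
rewrite (big_mkcond (fun i => i \in B)) -big_split /=; apply: ler_sum => i _.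
rewrite inE; case: (i \in A); case: (i \in B) => /=; rewrite ?addr0 ?add0r //.
  by rewrite lerDl.
Qed.

Lemma sum_subset_le (I : finType) (A B : {set I}) (F : I -> R) :
  (forall i, 0 <= F i) -> A \subset B ->
  \sum_(i in A) F i <= \sum_(i in B) F i.
Proof.
move=> F0 /subsetP AB; rewrite (big_mkcond (fun i => i \in A)) (big_mkcond (fun i => i \in B)).
apply: ler_sum => i _; case: ifP => [/AB -> //|_]; by case: ifP.
Qed.

Lemma set2_eq_inv (u x y : V) : x != u -> y != u -> [set u; x] = [set u; y] -> x = y.
Proof.
move=> xu yu E; have : x \in [set u; y] by rewrite -E !inE eqxx orbT.
by rewrite !inE (negbTE xu) => /eqP.
Qed.

End Aux.

Lemma edge_len2 (R : realFieldType) (V : finType) (d : V -> V -> R) u v : is_metric d ->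
  edge_len d [set u; v] = d u v.
Proof.
case=> d0 dE dS _.
have dd : forall x, d x x = 0 by move=> x; apply/dE.
apply/le_anti/andP; split.
  rewrite /edge_len; apply: bigmax_le => // x /set2P [->|->];
  apply: bigmax_le => // y /set2P [->|->]; by rewrite ?dd // dS.
rewrite /edge_len.
apply: (bigmax_sup u); first by rewrite !inE eqxx.
apply: (bigmax_sup v); first by rewrite !inE eqxx orbT.
by [].
Qed.


Section Tree.
Variable V : finType.

Lemma adj_sym (F : {set {set V}}) : symmetric (adj F).
Proof. by move=> x y; rewrite /adj eq_sym setUC. Qed.

Lemma connect_adj_sym (F : {set {set V}}) x y : connect (adj F) x y = connect (adj F) y x.
Proof. exact: (sym_connect_sym (@adj_sym F)). Qed.

Lemma set2_eqP (x y a b : V) : x != y -> [set x; y] = [set a; b] ->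
  (x = a /\ y = b) \/ (x = b /\ y = a).
Proof.
move=> xy E.
have xab : x \in [set a; b] by rewrite -E; apply/set2P; left.
have yab : y \in [set a; b] by rewrite -E; apply/set2P; right.
move: xy; case/set2P: xab => ->; case/set2P: yab => ->; rewrite ?eqxx //; by [left|right].
Qed.

Definition conb (X : {set V}) (F : {set {set V}}) : bool :=
  [forall u in X, forall v in X, connect (adj F) u v].

Lemma conbP (X : {set V}) (F : {set {set V}}) : reflect (forall u v, u \in X -> v \in X -> connect (adj F) u v) (conb X F).
Proof.
apply: (iffP forall_inP) => [H u v uX vX|H u uX].
  by move: (H u uX) => /forall_inP; apply.
by apply/forall_inP => v vX; apply: H.
Qed.

Lemma tree_in (X : {set V}) (E : {set {set V}}) : X != set0 ->
  (forall e, e \in E -> #|e| = 2 /\ e \subset X) ->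
  (forall u v, u \in X -> v \in X -> connect (adj E) u v) ->
  exists F : {set {set V}}, F \subset E /\ is_tree ((X, F) : subgraph V).
Proof.
move=> X0 EX cE.
pose P := fun F : {set {set V}} => (F \subset E) && conb X F.
have PE : P E by rewrite /P subxx; apply/conbP.
case: (arg_minnP (fun F : {set {set V}} => #|F|) PE) => F /andP[FE /conbP cF] minF.
exists F; split => //; split => //=.
- by move=> e eF; apply: EX; apply: (subsetP FE).
- move=> [s [s3 us cs]].
  case: s s3 us cs => [|a [|b rest]] //= s3 us cs.
  have rest0 : rest != [::] by case: rest s3 {us cs}.
  move: cs => /= /andP[abF pth].
  move: us => /andP[]; rewrite inE negb_or => /andP[ab arest] /andP[brest urest].
  set e := [set a; b].
  have eF : e \in F by case/andP: abF.
  set F' := F :\ e.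
  have Fstep : forall x y, x != a -> y != a -> adj F x y -> adj F' x y.
    move=> x y xa ya /andP[xy xyF]; rewrite /adj xy /F' !inE xyF andbT /=.
    apply/eqP => E2; have : a \in [set x; y] by rewrite E2 !inE eqxx.
    by case/set2P => E3; [move: xa | move: ya]; rewrite -E3 eqxx.
  move: pth; rewrite rcons_path => /andP[pth lst].
  have pth' : path (adj F') b rest.
    apply: (@sub_in_path _ (predC1 a)); last exact: pth.
      by move=> x y; rewrite !inE; apply: Fstep.
    apply/allP => x; rewrite inE => /orP[/eqP->|xr]; rewrite inE.
      by rewrite eq_sym.
    by apply/eqP => xa; subst; rewrite xr in arest.
  have lst' : adj F' (last b rest) a.
    have za : last b rest != a.
      have := mem_last b rest; rewrite inE => /orP[/eqP->|zr]; first by rewrite eq_sym.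
      by apply/eqP => E2; rewrite -E2 zr in arest.
    case/andP: lst => zaN zaF; rewrite /adj zaN /F' !inE zaF andbT /=.
    apply/eqP => E2.
    have : b \in [set last b rest; a] by rewrite E2 !inE eqxx orbT.
    case/set2P => [bz|ba]; last by rewrite ba eqxx in ab.
    case: rest rest0 {s3 pth pth' arest urest za zaN zaF E2 Fstep} brest bz => // r rs _.
    by rewrite /= => brest bz; have := mem_last r rs; rewrite -bz (negbTE brest).
  have cba : connect (adj F') b a.
    apply/connectP; exists (rcons rest a); first by rewrite rcons_path pth'.
    by rewrite last_rcons.
  have cF' : forall u v, u \in X -> v \in X -> connect (adj F') u v.
    move=> u v uX vX; apply: (connect_sub _ (cF u v uX vX)) => x y xy.
    case E2 : ([set x; y] == e).
      case/andP: xy => xy _; case: (set2_eqP xy (eqP E2)) => [[-> ->]|[-> ->]] //.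
      by rewrite connect_adj_sym.
    apply: connect1; case/andP: xy => xy xyF.
    by rewrite /adj xy /F' !inE xyF E2.
  have PF' : P F'.
    rewrite /P; apply/andP; split; last exact/conbP.
    by apply: subset_trans FE; apply: subsetDl.
  have := minF _ PF'.
  by rewrite /F' (cardsD1 e F) eF ltnn.
Qed.
End Tree.

Lemma arith (R : realFieldType) (g m S J : R) : 1 < g -> 0 <= m -> 0 <= J ->
  J * m <= S -> J + 1 <= 2 / (2 - g) -> J * m + S <= g * (m + S).
Proof.
move=> g1 m0 J0 JS hk.
have S0 : 0 <= S by apply: le_trans JS; apply: mulr_ge0.
case: (ltrP g 2) => g2; last first.
  have : 2 / (2 - g) <= 0.
    apply: mulr_ge0_le0 => //; rewrite invr_le0; lra.
  lra.
have hk' : (J + 1) * (2 - g) <= 2.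
  by rewrite -ler_pdivlMr //; lra.
case: (lerP J 1) => J1.
  have : J * m <= m by nra.
  nra.
have h1 : 0 <= (J - 1) * (S - J * m) by apply: mulr_ge0; lra.
have h2 : 2 * J <= g * (J + 1) by nra.
have h3 : (J + 1) * (J * m + S) <= (g * (J + 1)) * (m + S).
  apply: le_trans (_ : 2 * J * (m + S) <= _); first by nra.
  by apply: ler_wpM2r => //; lra.
nra.
Qed.

Definition pb (P : Prop) : bool := if excluded_middle_informative P then true else false.
Lemma pbP (P : Prop) : pb P <-> P.
Proof. by rewrite /pb; case: excluded_middle_informative. Qed.


Unset Implicit Arguments.

Theorem mainTheorem5 (R : realFieldType) (V : finType) (d : V -> V -> R)
  (T : {set V}) (gamma : R) (OPT : subgraph V) :
  is_metric d -> T != set0 -> 1 < gamma ->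
  stable d T gamma -> min_steiner T (edge_len d) OPT ->
  forall s, s \in OPT.1 -> s \notin T ->
    2 / (2 - gamma) < (deg OPT s)%:R.
Proof.
move=> met T0 g1 [O0 [O0min O0uniq]] optmin s sO sT.
have len0 := @edge_len_ge0 R V d.
have met' := met; case: met' => d0 dE dS dtri.
have lenle : forall e, edge_len d e <= gamma * edge_len d e.
  by move=> e; have := len0 e; nra.
have OPTeq : OPT = O0.
  apply: (O0uniq (edge_len d)) => //.
  by move=> u v _; rewrite lexx /=.
have optst := optmin.1.
case: optmin => [[[O1ne Eprop conn acyc] TO] optle].
pose N := [set x | adj OPT.2 s x].
have NP : forall x, x \in N -> x \in OPT.1 /\ x != s.
  move=> x; rewrite inE => /andP[sx sxO]; split; last by rewrite eq_sym.
  by have [_ /subsetP] := Eprop _ sxO; apply; rewrite !inE eqxx orbT.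
pose fS := fun x : V => [set s; x].
have fSinj : {in N &, injective fS}.
  move=> x y /NP[_ xs] /NP[_ ys]; exact: set2_eq_inv.
have Star : [set e in OPT.2 | s \in e] = fS @: N.
  apply/setP => e; rewrite inE; apply/andP/imsetP.
    case=> eO se; have [/eqP/cards2P [x [y [xy exy]]] _] := Eprop _ eO.
    rewrite exy in eO se *; case/set2P: se => E; rewrite -E in xy eO *.
      by exists y => //; rewrite inE /adj xy eO.
    exists x; first by rewrite inE /adj eq_sym xy setUC eO.
    by rewrite /fS setUC.
  case=> x xN ->; split; first by move: xN; rewrite inE => /andP[].
  by rewrite !inE eqxx.
have degN : deg OPT s = #|N| by rewrite /deg Star card_in_imset.
have [t tT] := set0Pn _ T0.
have tO : t \in OPT.1 := subsetP TO t tT.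
have ts : t != s by apply: contraNneq sT => <-.
have [x0 x0N] : exists x, x \in N.
  case/connectP: (conn s t sO tO) => [[|x p]] /=.
    by move=> _ ts'; rewrite ts' eqxx in ts.
  by move=> /andP[sx _] _; exists x; rewrite inE.
case: (arg_minP (fun x => d s x) x0N) => u1 u1N minu1.
pose c := fun e : {set V} => if s \in e then gamma * edge_len d e else edge_len d e.
have c0 : forall e, 0 <= c e.
  move=> e; rewrite /c; case: ifP => _ //; apply: le_trans (lenle e); exact: len0.
have cpert : perturbation d gamma c.
  by move=> u v _; rewrite /c; case: ifP => _; rewrite lenle ?lexx.
pose P := fun G : subgraph V => pb (is_steiner T G).
have POPT : P OPT by apply/pbP.
case: (arg_minP (weight c) POPT) => Gs /pbP Gsst Gsmin.
have GsOPT : Gs = OPT.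
  rewrite OPTeq; apply: (O0uniq c cpert); split => // G' G'st; apply: Gsmin; exact/pbP.
have OPTcmin : forall G', is_steiner T G' -> weight c OPT <= weight c G'.
  move=> G' st; rewrite -GsOPT; apply: Gsmin; exact/pbP.
pose A := [set e in OPT.2 | s \notin e].
pose B := [set [set u1; x] | x in N :\ u1].
pose H1 := OPT.1 :\ s.
have [u1O u1s] := NP _ u1N.
have HE : forall e, e \in A :|: B -> #|e| = 2 /\ e \subset H1.
  move=> e; rewrite in_setU => /orP[|].
    rewrite inE => /andP[eO se]; have [e2 eO1] := Eprop _ eO; split => //.
    apply/subsetP => x xe; rewrite in_setD1 (subsetP eO1 _ xe) andbT.
    by apply: contraNneq se => <-.
  case/imsetP => x; rewrite in_setD1 => /andP[xu1 xN] ->.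
  have [xO xs] := NP _ xN.
  split; first by rewrite cards2 eq_sym xu1.
  by apply/subsetP => y /set2P [->|->]; rewrite in_setD1 ?u1s ?u1O ?xs ?xO.
have Hadj : forall z y, z != s -> y != s -> adj OPT.2 z y -> adj (A :|: B) z y.
  move=> z y zs ys /andP[zy zyO]; rewrite /adj zy /= in_setU; apply/orP; left.
  rewrite inE zyO /=; apply/negP => /set2P [E|E].
    by rewrite E eqxx in zs.
  by rewrite E eqxx in ys.
have Hu1 : forall y, y \in N -> connect (adj (A :|: B)) u1 y.
  move=> y yN; case: (eqVneq y u1) => [->|yu1]; first exact: connect0.
  apply: connect1; rewrite /adj eq_sym yu1 /= in_setU; apply/orP; right.
  by apply/imsetP; exists y => //; rewrite in_setD1 yu1.
have Hconn0 : forall v, v \in H1 -> connect (adj (A :|: B)) u1 v.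
  move=> v; rewrite in_setD1 => /andP[vs vO].
  case/connectP: (conn u1 v u1O vO) => p pth vlast.
  suff : last u1 p = s \/ connect (adj (A :|: B)) u1 (last u1 p).
    by rewrite -vlast => -[/eqP|] //; rewrite (negbTE vs).
  elim/last_ind: p pth {vlast} => [|q y IH]; first by move=> _; right; exact: connect0.
  rewrite rcons_path last_rcons => /andP[pq zy].
  case: (eqVneq y s) => [->|ys]; first by left.
  case: (eqVneq (last u1 q) s) => [zs|zs].
    by right; apply: Hu1; rewrite inE -zs.
  case: (IH pq) => [E|cz]; first by rewrite E eqxx in zs.
  right; apply: connect_trans cz _; apply: connect1; exact: Hadj.
have Hconn : forall u v, u \in H1 -> v \in H1 -> connect (adj (A :|: B)) u v.
  move=> u v uH vH; apply: connect_trans (Hconn0 v vH).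
  rewrite connect_adj_sym; exact: Hconn0.
have H10 : H1 != set0 by apply/set0Pn; exists t; rewrite in_setD1 ts tO.
case: (tree_in H10 HE Hconn) => F [FAB Ftree].
pose G := ((H1, F) : subgraph V).
have Gst : is_steiner T G.
  split => //; apply/subsetP => x xT; rewrite /G /= in_setD1 (subsetP TO _ xT) andbT.
  by apply: contraNneq sT => <-.
have GneO : G <> OPT.
  move=> E; have : s \in G.1 by rewrite E.
  by rewrite /G /= in_setD1 eqxx.
have WG : weight c G <= \sum_(e in A) edge_len d e + \sum_(x in N :\ u1) (d s u1 + d s x).
  apply: le_trans (_ : weight c G <= \sum_(e in A :|: B) c e) _.
    exact: sum_subset_le.
  apply: le_trans (sum_setU_le _ _ c0) _.
  apply: lerD.
    rewrite le_eqVlt; apply/orP; left; apply/eqP.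
    apply: eq_bigr => e; rewrite inE => /andP[_ se]; by rewrite /c (negbTE se).
  rewrite big_imset /=; last first.
    move=> x y; rewrite !in_setD1 => /andP[xu _] /andP[yu _]; exact: set2_eq_inv.
  apply: ler_sum => x; rewrite in_setD1 => /andP[xu1 xN].
  have [_ xs] := NP _ xN.
  rewrite /c ifF; last first.
    by apply/negP => /set2P [E|E]; [rewrite E eqxx in u1s|rewrite E eqxx in xs].
  rewrite edge_len2 //; apply: le_trans (dtri u1 s x) _; by rewrite dS.
have SN : \sum_(x in N) d s x = d s u1 + \sum_(x in N :\ u1) d s x.
  by rewrite (big_setD1 u1).
have WO : weight c OPT = \sum_(e in A) edge_len d e
           + gamma * (d s u1 + \sum_(x in N :\ u1) d s x).
  rewrite /weight (bigID (fun e : {set V} => s \in e)) /= addrC; congr (_ + _).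
    apply: eq_big => e; first by rewrite inE.
    by move=> /andP[_ se]; rewrite /c (negbTE se).
  rewrite -SN mulr_sumr.
  have -> : \sum_(e in OPT.2 | s \in e) c e = \sum_(e in fS @: N) c e.
    by apply: eq_bigl => e; rewrite -Star inE.
  rewrite big_imset //=; apply: eq_bigr => x xN.
  by rewrite /c /fS !inE eqxx /= edge_len2.
set m := d s u1. set S' := \sum_(x in N :\ u1) d s x. set j := #|N :\ u1|.
have SN' : \sum_(x in N :\ u1) (m + d s x) = m *+ j + S' by rewrite big_split /= sumr_const.
have JS : j%:R * m <= S'.
  rewrite mulr_natl -sumr_const; apply: ler_sum => x; rewrite in_setD1 => /andP[_ xN].
  exact: minu1.
have u1N' : u1 \in N := u1N.
have kj : #|N| = j.+1 by rewrite (cardsD1 u1 N) u1N'.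
rewrite degN kj ltNge; apply/negP => hk.
have hk' : j%:R + 1 <= 2 / (2 - gamma) by move: hk; rewrite -addn1 natrD.
have key := arith g1 (d0 s u1) (ler0n _ j) JS hk'.
have WGO : weight c G <= weight c OPT.
  apply: le_trans WG _; rewrite WO SN' lerD2l -mulr_natl; exact: key.
apply: GneO; rewrite OPTeq; apply: (O0uniq c cpert); split => // G' G'st.
exact: le_trans WGO (OPTcmin _ G'st).
Qed.
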